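(* Let $X=\mu^{-1}(0)/G$ be a toric Calabi-Yau manifold obtained as a symplectic quotient of $\mathbb{C}^m$ by a subtorus $G\subset T^m$, with quotient map $\pi:\mu^{-1}(0)\to X$, and let $\epsilon\in\mathbb{C}^\times$. Let $\rho=(\rho_0,|\chi^u-\epsilon|):X\to B=\mathbb{R}^{n-1}\times\mathbb{R}_{\geq 0}$ be the Gross fibration and let $$\tilde\rho:\mathbb{C}^m\to\tilde B=\mathbb{R}^{m-1}\times\mathbb{R}_{\geq0},\quad (X_1,\dots,X_m)\mapsto\big(|X_1|^2-|X_m|^2,\dots,|X_{m-1}|^2-|X_m|^2,\ |X_1X_2\cdots X_m-\epsilon|\big)$$ be the Harvey-Lawson fibration. Then the Gross fibration $\rho$ is the fiberwise quotient of $\tilde\rho|_{\mu^{-1}(0)}$ by $G$: there is an embedding of affine manifolds $\iota:B\hookrightarrow\tilde B$ (induced by the map $\mathfrak{t}^*\to(\mathbb{R}^m)^*$, $\mathbf{x}\mapsto(\ell_1(\mathbf{x}),\dots,\ell_m(\mathbf{x}))$) such that $\tilde\rho|_{\mu^{-1}(0)}=\iota\circ\rho\circ\pi$, so that each fiber of $\rho$ is the quotient by $G$ of the corresponding fiber of $\tilde\rho|_{\mu^{-1}(0)}$.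
   Context: $T^m$ acts diagonally on $\mathbb{C}^m$ (standard symplectic form); $G\subset T^m$ is a subtorus of dimension $r=m-n$ with moment map $\mu$, acting freely on $\mu^{-1}(0)$, and $X=\mu^{-1}(0)/G$ is a toric manifold of complex dimension $n$ with residual torus $T=T^m/G$ and moment map $\phi:X\to\mathfrak{t}^*$, whose image is $\Delta=\{\mathbf{x}:\ell_i(\mathbf{x})\ge0,\ i=1,\dots,m\}$, $\ell_i(\mathbf{x})=2\pi(\langle\mathbf{x},v_i\rangle-\lambda_i)$, with $v_i\in N=\mathbb{Z}^n$ the primitive inward normals (ray generators of the fan) and $\lambda_i\in\mathbb{R}$; one has $\ell_i(\phi([X_1,\dots,X_m]))=2\pi|X_i|^2$ on $\mu^{-1}(0)$. $X$ is Calabi-Yau (trivial canonical bundle) and semi-projective (support of the fan convex), so there is $u\in M=\mathrm{Hom}(N,\mathbb{Z})$ with $\langle u,v_i\rangle=1$ for all $i$; the character $\chi^u$ is a holomorphic function on $X$ vanishing to first order exactly along the toric prime divisors, and it lifts to the monomial $X_1\cdots X_m$ on $\mathbb{C}^m$. $T_0\subset T$ is the subtorus preserving $\chi^u$ (equivalently the holomorphic volume form), and $\rho_0:X\to\mathfrak{t}_0^*\cong\mathbb{R}^{n-1}$ is its moment map, i.e. $\phi$ composed with the projection along the ray spanned by $u$. The Gross fibration is $\rho=(\rho_0,|\chi^u-\epsilon|)$, a special Lagrangian torus fibration. *)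

(* Defs.v *)
From mathcomp Require Import all_boot all_algebra.
From mathcomp Require Export complex.
From mathcomp Require Export reals trigo.
Import GRing.Theory Num.Theory.
Set Implicit Arguments. Unset Strict Implicit. Unset Printing Implicit Defensive.
Local Open Scope ring_scope.

(* Ambient space C^k is ('I_k -> R[i]).  In the theorem the paper's m is
   written m.+1 (so that the last coordinate ord_max exists). *)

Definition sqmod (R : realType) (z : R[i]) : R := complex.Re z ^+ 2 + complex.Im z ^+ 2.
Definition modC (R : realType) (z : R[i]) : R := Num.sqrt (sqmod z).

Definition pairing (R : realType) (n : nat) (x : 'I_n -> R) (w : 'I_n -> int) : R :=
  \sum_(j < n) x j * (w j)%:~R.

Definition ell (R : realType) (n k : nat) (v : 'I_k -> 'I_n -> int) (lam : 'I_k -> R)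
  (i : 'I_k) (x : 'I_n -> R) : R :=
  2 * pi * (pairing x (v i) - lam i).

Definition in_torus (R : realType) (k : nat) (g : 'I_k -> R[i]) : Prop :=
  forall i, sqmod (g i) = 1.
Definition act (R : realType) (k : nat) (g X : 'I_k -> R[i]) : 'I_k -> R[i] :=
  fun i => g i * X i.

(* G = kernel of T^k -> T^n induced by e_i |-> v_i *)
Definition in_G (R : realType) (n k : nat) (v : 'I_k -> 'I_n -> int) (g : 'I_k -> R[i]) : Prop :=
  in_torus g /\ forall j : 'I_n, \prod_(i < k) (g i) ^ (v i j) = 1.

(* Lie algebra of G: g = ker (R^k -> R^n, e_i |-> v_i) *)
Definition in_LieG (R : realType) (n k : nat) (v : 'I_k -> 'I_n -> int) (a : 'I_k -> R) : Prop :=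
  forall j : 'I_n, \sum_(i < k) a i * (v i j)%:~R = 0.

(* moment map of G evaluated on a in Lie(G):
   mu(X)(a) = sum_i a_i (|X_i|^2 + lambda_i)  (normalised so that
   l_i(phi [X]) = 2 pi |X_i|^2 on mu^{-1}(0)) *)
Definition moment (R : realType) (k : nat) (lam : 'I_k -> R) (X : 'I_k -> R[i])
  (a : 'I_k -> R) : R :=
  \sum_(i < k) a i * (sqmod (X i) + lam i).
Definition mu_zero (R : realType) (n k : nat) (v : 'I_k -> 'I_n -> int) (lam : 'I_k -> R)
  (X : 'I_k -> R[i]) : Prop :=
  forall a, in_LieG v a -> moment lam X a = 0.

(* points of the quotient mu^{-1}(0)/G are G-orbits (sets of points of C^k);
   quotient map pi *)
Definition quotmap (R : realType) (n k : nat) (v : 'I_k -> 'I_n -> int)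
  (X : 'I_k -> R[i]) : ('I_k -> R[i]) -> Prop :=
  fun Y => exists g, in_G v g /\ Y = act g X.

(* moment map phi of the residual torus, as a relation: phi(O) = x *)
Definition phi_rel (R : realType) (n k : nat) (v : 'I_k -> 'I_n -> int) (lam : 'I_k -> R)
  (O : ('I_k -> R[i]) -> Prop) (x : 'I_n -> R) : Prop :=
  exists Y, O Y /\ forall i, ell v lam i x = 2 * pi * sqmod (Y i).

(* the character chi^u, through its lift X_1 ... X_k *)
Definition chi_rel (R : realType) (k : nat) (O : ('I_k -> R[i]) -> Prop) (z : R[i]) : Prop :=
  exists Y, O Y /\ z = \prod_(i < k) Y i.

(* t_0^* = t^* / R u : points represented by elements of t^*, equality mod R u *)
Definition eq_mod_u (R : realType) (n : nat) (u : 'I_n -> int) (y x : 'I_n -> R) : Prop :=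
  exists s : R, forall j, y j = x j + s * (u j)%:~R.

(* B = t_0^* x R_{>=0}; a point (y, r) with y a representative in t^* *)
Definition Bpt (R : realType) (n : nat) := (('I_n -> R) * R)%type.

(* Gross fibration rho = (rho_0, |chi^u - eps|) as a relation on X x B:
   rho(O) = (y, r) (y taken modulo R u) *)
Definition rho_rel (R : realType) (n k : nat) (v : 'I_k -> 'I_n -> int) (lam : 'I_k -> R)
  (u : 'I_n -> int) (eps : R[i]) (O : ('I_k -> R[i]) -> Prop) (b : Bpt R n) : Prop :=
  (exists x, phi_rel v lam O x /\ eq_mod_u u b.1 x) /\
  (exists z, chi_rel O z /\ b.2 = modC (z - eps)).

Definition HL (R : realType) (m : nat) (eps : R[i]) (X : 'I_m.+1 -> R[i]) :
  ('I_m -> R) * R :=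
  (fun i => sqmod (X (widen_ord (leqnSn m) i)) - sqmod (X ord_max),
   modC (\prod_(i < m.+1) X i - eps)).

Definition iotaB (R : realType) (n m : nat) (v : 'I_m.+1 -> 'I_n -> int) (lam : 'I_m.+1 -> R)
  (b : Bpt R n) : ('I_m -> R) * R :=
  (fun i => (ell v lam (widen_ord (leqnSn m) i) b.1 - ell v lam ord_max b.1) / (2 * pi),
   b.2).

Definition Bcomb (R : realType) (n : nat) (t : R) (a b : Bpt R n) : Bpt R n :=
  (fun j => t * a.1 j + (1 - t) * b.1 j, t * a.2 + (1 - t) * b.2).
Definition Btcomb (R : realType) (m : nat) (t : R) (a b : ('I_m -> R) * R) : ('I_m -> R) * R :=
  (fun j => t * a.1 j + (1 - t) * b.1 j, t * a.2 + (1 - t) * b.2).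
Arguments iotaB {R n m} v lam b.
Arguments HL {R m} eps X.
Arguments rho_rel {R n k} v lam u eps O b.
Arguments quotmap {R n k} v X _.
Arguments mu_zero {R n k} v lam X.
Arguments in_G {R n k} v g.
Arguments pairing {R n} x w.
Arguments act {R k} g X _.
Arguments eq_mod_u {R n} u y x.
Arguments Bcomb {R n} t a b.
Arguments Btcomb {R m} t a b.

(* Main.v *)
Require Import Defs.
From mathcomp Require Import all_boot all_algebra.
From mathcomp Require Import complex reals trigo.
From mathcomp Require Import ring lra.
Import GRing.Theory Num.Theory.
Local Open Scope ring_scope.
Set Implicit Arguments. Unset Strict Implicit.

Lemma sqmodM (R : realType) (g X : R[i]) : sqmod (g * X) = sqmod g * sqmod X.
Proof. case: g => a b; case: X => c d; rewrite /sqmod /=. ring. Qed.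

Lemma sqmod1 (R : realType) : sqmod (1 : R[i]) = 1.
Proof. rewrite /sqmod /=. ring. Qed.

Lemma intr_sum (R : realType) k (F : 'I_k -> int) :
  (\sum_(j < k) F j)%:~R = \sum_(j < k) (F j)%:~R :> R.
Proof. by elim/big_rec2: _ => // j a b _ <-; rewrite intrD. Qed.

Lemma pairing_lin (R : realType) n (a b : R) (x y : 'I_n -> R) w :
  pairing (fun j => a * x j + b * y j) w = a * pairing x w + b * pairing y w.
Proof.
rewrite /pairing !mulr_sumr -big_split /=; apply: eq_bigr => j _; ring.
Qed.

Lemma pairing_u (R : realType) n k (v : 'I_k -> 'I_n -> int) (u : 'I_n -> int)
  (hCY : forall i, \sum_(j < n) u j * v i j = 1%R) i :
  pairing (fun j => (u j)%:~R : R) (v i) = 1.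
Proof.
rewrite /pairing -[1 in RHS](mulr1z (1:R)) -(hCY i) intr_sum; apply: eq_bigr => j _.
by rewrite intrM.
Qed.

Lemma ell_comb (R : realType) n k (v : 'I_k -> 'I_n -> int) lam i (t : R) x y :
  ell v lam i (fun j => t * x j + (1 - t) * y j) = t * ell v lam i x + (1 - t) * ell v lam i y.
Proof. rewrite /ell pairing_lin; ring. Qed.

Lemma ell_shift (R : realType) n k (v : 'I_k -> 'I_n -> int) (u : 'I_n -> int) lam
  (hCY : forall i, \sum_(j < n) u j * v i j = 1%R) i (x : 'I_n -> R) s :
  ell v lam i (fun j => x j + s * (u j)%:~R) = ell v lam i x + 2 * pi * s.
Proof.
have := pairing_lin 1 s x (fun j => (u j)%:~R : R) (v i).
rewrite (pairing_u R hCY) /ell.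
have -> : (fun j => 1 * x j + s * (u j)%:~R) = (fun j => x j + s * (u j)%:~R).
  by apply: boolp.funext => j; rewrite mul1r.
move=> ->; ring.
Qed.

Lemma pi_neq0 (R : realType) : (2 * pi : R) != 0.
Proof. by rewrite mulf_neq0 // ?pnatr_eq0 // lt0r_neq0 // pi_gt0. Qed.

Lemma ord_cases m (i : 'I_m.+1) : i = ord_max \/ exists j : 'I_m, i = widen_ord (leqnSn m) j.
Proof.
case: (ltnP i m) => h.
  by right; exists (Ordinal h); apply: val_inj.
by left; apply: val_inj => /=; apply/eqP; rewrite eqn_leq h -ltnS ltn_ord.
Qed.

Lemma iota_inj (R : realType) (n m : nat)
  (v : 'I_m.+1 -> 'I_n -> int) (lam : 'I_m.+1 -> R) (u : 'I_n -> int)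
  (hspan : forall x : 'I_n -> R, (forall i, pairing x (v i) = 0) -> forall j, x j = 0)
  (hCY : forall i, \sum_(j < n) u j * v i j = 1%R) :
  forall b b' : Bpt R n, iotaB v lam b = iotaB v lam b' ->
      eq_mod_u u b'.1 b.1 /\ b'.2 = b.2.
Proof.
move=> [x r] [x' r'] /= [h1 h2]; split => //.
set d := fun j => 1 * x' j + (-1) * x j.
set c := pairing d (v ord_max).
have hd : forall i, pairing d (v i) = c.
  move=> i; case: (ord_cases i) => [->//|[j ->]].
  have := congr1 (fun f => f j) h1 => /= /(congr1 (fun z => z * (2 * pi))).
  rewrite !divfK ?pi_neq0 // /c /d !pairing_lin /ell => e.
  have e' : (pairing x' (v (widen_ord (leqnSn m) j)) - pairing x (v (widen_ord (leqnSn m) j)))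
     = (pairing x' (v ord_max) - pairing x (v ord_max)).
    have : 2 * pi * ((pairing x' (v (widen_ord (leqnSn m) j)) - pairing x (v (widen_ord (leqnSn m) j)))
     - (pairing x' (v ord_max) - pairing x (v ord_max))) = 0.
      rewrite -[LHS]subr0 -[X in _ - X](subrr (2 * pi * (pairing x (v (widen_ord (leqnSn m) j)) - lam (widen_ord (leqnSn m) j)) -
       2 * pi * (pairing x (v ord_max) - lam ord_max))).
      rewrite [X in _ - (X - _)]e; ring.
    by move/eqP; rewrite mulf_eq0 (negbTE (pi_neq0 R)) /= subr_eq0 => /eqP.
  move: e'; lra.
exists c => j.
have H0 : forall i, pairing (fun j => 1 * d j + (- c) * (u j)%:~R) (v i) = 0.
  by move=> i; rewrite pairing_lin hd (pairing_u R hCY); ring.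
move: (hspan _ H0 j); rewrite /d /= => h.
apply/eqP; rewrite -subr_eq0 -h; apply/eqP; ring.
Qed.

Lemma exprz_sum (F : fieldType) (x : F) k (a : 'I_k -> int) :
  x != 0 -> x ^ (\sum_(j < k) a j) = \prod_(j < k) x ^ a j.
Proof.
move=> hx; elim/big_rec2: _ => [|j s p _ <-]; first by rewrite expr0z.
by rewrite expfzDr.
Qed.

Lemma prod_exprz (F : fieldType) k (f : 'I_k -> F) (e : int) :
  (\prod_(i < k) f i) ^ e = \prod_(i < k) f i ^ e.
Proof.
elim/big_rec2: _ => [|j s p _ <-]; first by rewrite exp1rz.
by rewrite expfzMl.
Qed.

Lemma G_prod (R : realType) n k (v : 'I_k -> 'I_n -> int) (u : 'I_n -> int)
  (hCY : forall i, \sum_(j < n) u j * v i j = 1%R) (g : 'I_k -> R[i]) :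
  in_G v g -> \prod_(i < k) g i = 1.
Proof.
move=> [ht hg].
have nz : forall i, g i != 0.
  move=> i; apply/eqP => e; have := ht i; rewrite e /sqmod /= => /eqP.
  by rewrite expr0n /= addr0 eq_sym oner_eq0.
transitivity (\prod_(i < k) \prod_(j < n) (g i ^ v i j) ^ u j).
  apply: eq_bigr => i _; rewrite -{1}(expr1z (g i)) -(hCY i) exprz_sum //.
  by apply: eq_bigr => j _; rewrite exprz_exp mulrC.
rewrite exchange_big /=; apply: big1 => j _.
by rewrite -prod_exprz hg exp1rz.
Qed.

Lemma lin_solve (R : realType) n k (v : 'I_k -> 'I_n -> int) (w : 'I_k -> R) :
  (forall a : 'I_k -> R, in_LieG v a -> \sum_(i < k) a i * w i = 0) ->
  exists x : 'I_n -> R, forall i, pairing x (v i) = w i.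
Proof.
move=> H.
pose VT : 'M[R]_(n, k) := \matrix_(j, i) (v i j)%:~R.
have : (\row_i w i <= VT)%MS.
  rewrite submxE; apply/eqP/matrixP => a c; rewrite !mxE.
  have hL : in_LieG v (fun i => cokermx VT i c).
    move=> j; have := mulmx_coker VT; move/matrixP/(_ j c); rewrite !mxE => h; rewrite -[RHS]h.
    by apply: eq_bigr => i _; rewrite mulrC [X in _ = X * _]mxE.
  by rewrite -[RHS](H _ hL); apply: eq_bigr => i _; rewrite mxE mulrC.
case/submxP => D hD.
exists (fun j => D 0 j) => i.
move/matrixP/(_ 0 i): hD; rewrite !mxE => ->.
by apply: eq_bigr => j _; rewrite mxE.
Qed.

Unset Implicit Arguments. Set Strict Implicit.

Theorem mainTheorem1 (R : realType) (n m : nat)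
  (v : 'I_m.+1 -> 'I_n -> int) (lam : 'I_m.+1 -> R) (u : 'I_n -> int) (eps : R[i])
  (* v_i primitive *)
  (hprim : forall i, \big[gcdz/0%R]_(j < n) v i j = 1%R)
  (* v_1..v_m span t (equivalently dim G = m - n, T = T^m/G of dim n) *)
  (hspan : forall x : 'I_n -> R, (forall i, pairing x (v i) = 0) -> forall j, x j = 0)
  (* G acts freely on mu^{-1}(0) *)
  (hfree : forall X, mu_zero v lam X -> forall g, in_G v g ->
             (forall i, act g X i = X i) -> forall i, g i = 1)
  (* Calabi-Yau: <u, v_i> = 1 *)
  (hCY : forall i, \sum_(j < n) u j * v i j = 1%R)
  (heps : eps != 0) :
  (* iotaB descends to t_0^* x R = (t^*/R u) x R *)
  (forall (x : 'I_n -> R) (s r : R),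
      iotaB v lam ((fun j => x j + s * (u j)%:~R), r) = iotaB v lam (x, r)) /\
  (* iotaB is injective on B *)
  (forall b b' : Bpt R n, iotaB v lam b = iotaB v lam b' ->
      eq_mod_u u b'.1 b.1 /\ b'.2 = b.2) /\
  (* iotaB is affine *)
  (forall (t : R) (a b : Bpt R n),
      iotaB v lam (Bcomb t a b) = Btcomb t (iotaB v lam a) (iotaB v lam b)) /\
  (* HL|_{mu^{-1}(0)} = iotaB o rho o pi, fiberwise *)
  (forall X, mu_zero v lam X ->
      (exists b, rho_rel v lam u eps (quotmap v X) b) /\
      (forall b, rho_rel v lam u eps (quotmap v X) b <-> HL eps X = iotaB v lam b)).
Proof.
have H1 : forall x s r, iotaB v lam ((fun j => x j + s * (u j)%:~R), r) = iotaB v lam (x, r).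
  move=> x s r; rewrite /iotaB /=; congr pair; apply: boolp.funext => i.
  by rewrite !(@ell_shift R n m.+1 v u lam hCY); congr (_ / _); ring.
have H2 := @iota_inj R n m v lam u hspan hCY.
have H3 : forall (t : R) (a b : Bpt R n),
      iotaB v lam (Bcomb t a b) = Btcomb t (iotaB v lam a) (iotaB v lam b).
  move=> t [a ra] [b rb]; rewrite /iotaB /Bcomb /Btcomb /=; congr pair.
  by apply: boolp.funext => i /=; rewrite !ell_comb; ring.
split=> //; split=> //; split=> //.
move=> X hX.
have [x0 hx0] : exists x0, forall i, ell v lam i x0 = 2 * pi * sqmod (X i).
  have [x hx] := @lin_solve R n m.+1 v (fun i => sqmod (X i) + lam i) hX.
  by exists x => i; rewrite /ell hx; ring.
have g1 : in_G v (fun _ => 1 : R[i]).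
  split; first by move=> i; exact: sqmod1.
  by move=> j; apply: big1 => i _; rewrite exp1rz.
have act1 : act (fun _ => 1) X = X by apply: boolp.funext => i; rewrite /act mul1r.
have HLx : forall x, (forall i, ell v lam i x = 2 * pi * sqmod (X i)) ->
    forall r, iotaB v lam (x, r) = ((HL eps X).1, r).
  move=> x hx r; rewrite /iotaB /HL /=; congr pair; apply: boolp.funext => i.
  by rewrite !hx -mulrBr [2 * pi * _]mulrC mulfK ?pi_neq0.
have chiX : forall z, chi_rel (quotmap v X) z -> z = \prod_i X i.
  move=> z [Y [[g [hg ->]] ->]].
  by rewrite /act big_split /= (G_prod hCY hg) mul1r.
have phiX : forall x, phi_rel v lam (quotmap v X) x ->
    forall i, ell v lam i x = 2 * pi * sqmod (X i).
  by move=> x [Y [[g [hg ->]] hx]] i; rewrite hx /act sqmodM (proj1 hg i) mul1r.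
have phiX' : phi_rel v lam (quotmap v X) x0.
  by exists X; split => //; exists (fun _ => 1); rewrite act1.
have chiX' : chi_rel (quotmap v X) (\prod_i X i).
  by exists X; split => //; exists (fun _ => 1); rewrite act1.
split.
  exists (x0, modC (\prod_i X i - eps)); split.
    by exists x0; split => //; exists 0 => j; rewrite mul0r addr0.
  by exists (\prod_i X i).
move=> [y r]; split.
  move=> [[x [hx [s hs]]] [z [hz /= ->]]].
  have -> : y = (fun j => x j + s * (u j)%:~R) by apply: boolp.funext.
  by rewrite H1 (HLx _ (phiX _ hx)) (chiX _ hz).
move=> e.
have e' : iotaB v lam (x0, modC (\prod_i X i - eps)) = iotaB v lam (y, r).
  by rewrite (HLx _ hx0) -e.
have [hm h2] := H2 _ _ e'.
split; first by exists x0.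
by exists (\prod_i X i); split.
Qed.
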